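(* Let $\ell\ge2$, let $\mathbf{a}=(a_1,\ldots,a_\ell)\in\mathbf{Z}^\ell$ with $\sum a_j=0$, and let $\lambda=\pi_\ell(\mathbf{a})$. Let $i$ be the largest index with $a_i=\max\{a_1,\ldots,a_\ell\}$. Then \[ \lambda_1=(a_i-1)\ell+i \] and also \[ \lambda_1=\sum_{j=1}^{i-1}(a_i-a_j)+\sum_{j=i+1}^{\ell}(a_i-a_j-1). \]
   Context: For $\mathbf{a}\in\mathbf{Z}^\ell$ with $\sum a_j=0$, let $X(\mathbf{a})=\{r\ell+(j-1):1\le j\le\ell,\ r\in\mathbf{Z},\ r\le a_j\}$ and let $\pi_\ell(\mathbf{a})$ be the partition whose nonzero parts (in weakly decreasing order) are the positive values among $\#\{y\in\mathbf{Z}\setminus X(\mathbf{a}):y<x\}$, $x\in X(\mathbf{a})$. ($\pi_\ell$ is a bijection onto the set of $\ell$-cores, i.e. partitions none of whose hook lengths is divisible by $\ell$.) $\lambda_1$ denotes the first (largest) part, taken to be $0$ for the empty partition. *)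

(* Defs.v *)
From mathcomp Require Import all_boot all_order all_algebra.
Set Implicit Arguments. Unset Strict Implicit. Unset Printing Implicit Defensive.
Import Order.TTheory GRing.Theory Num.Theory.
Local Open Scope ring_scope.

(* Indices j = 1..l of the paper are represented by j' : 'I_l with j = j'+1,
   so the paper's element  r*l + (j-1)  is  r*l + j'. *)
Section Cores.
Variable l : nat.
Variable a : 'I_l -> int.

(* x \in X(a)  iff  x = r*l + j' for some j' : 'I_l and integer r <= a j'
   (r is then (x - j') / l). *)
Definition inX (x : int) : bool :=
  [exists j : 'I_l, ((l%:Z %| (x - j%:Z))%Z) && (((x - j%:Z) %/ l%:Z)%Z <= a j)].

(* B bounds |a_j|; every y < -B*l lies in X(a), and every x in X(a) is < B*l + l. *)
Definition Bnd : int := \sum_(j < l) `|a j|.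
Definition lowB : int := - (Bnd * l%:Z).
Definition uppB : int := Bnd * l%:Z + l%:Z.

Definition window (L x : int) : seq int :=
  [seq L + k%:Z | k <- iota 0 `|x - L|%N].

(* #{ y in Z \ X(a) : y < x }  (all y < lowB are in X(a), so counting
   from lowB loses nothing) *)
Definition gaps (x : int) : nat := count (fun y => ~~ inX y) (window lowB x).

(* pi_l(a): the positive values gaps x, x in X(a) (with multiplicity),
   in weakly decreasing order.  Only x in [lowB, uppB) can be in X(a) with
   gaps x > 0. *)
Definition pi_l : seq nat :=
  sort geq [seq gaps x | x <- window lowB uppB & inX x && (0 < gaps x)%N].

End Cores.

(* first (largest) part, 0 for the empty partition *)
Definition lambda1 (p : seq nat) : nat := head 0%N p.

(* Main.v *)
Require Import Defs.
From mathcomp Require Import all_boot all_order all_algebra.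
From mathcomp Require Import zify ring.
Import Order.TTheory GRing.Theory Num.Theory.
Local Open Scope ring_scope.

Section Count.
Local Open Scope nat_scope.
Variable n : nat.
Local Notation l := n.+1.
Variable b : 'I_l -> nat.
Definition Pk (k : nat) : bool := b (inord (k %% l)) < k %/ l.

Lemma count_sum T (p : pred T) s : count p s = \sum_(x <- s) p x.
Proof. by elim: s => [|x s IH]; rewrite ?big_nil ?big_cons //= IH. Qed.

Lemma block_part Q m : m <= l ->
  count Pk (iota (Q * l) m) = \sum_(j < l) ((j < m) * (b j < Q)).
Proof.
move=> ml.
rewrite -[Q * l]addn0 iotaDl count_map.
rewrite (@eq_in_count _ _ (fun j => b (inord j) < Q)); last first.
  move=> j; rewrite mem_iota add0n => jm /=; rewrite /Pk.
  have jl : j < l by apply: leq_trans ml.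
  by rewrite modnMDl modn_small // divnMDl // divn_small // addn0.
rewrite count_sum.
have -> : \sum_(j < l) ((j < m) * (b j < Q)) =
          \sum_(j < l) ((j < m) * (b (inord j) < Q)).
  by apply: eq_bigr => j _; rewrite inord_val.
rewrite -(big_mkord xpredT (fun j => (j < m) * (b (inord j) < Q))).
rewrite (@big_cat_nat _ _ _ m) //=.
rewrite [X in _ = _ + X]big1_seq ?addn0; last first.
  by move=> j /andP[_]; rewrite mem_index_iota => /andP[h _]; rewrite ltnNge h.
rewrite /index_iota subn0; apply: eq_big_seq => j; rewrite mem_iota => /andP[_ h]; by rewrite add0n in h; rewrite h mul1n.
Qed.

Lemma block_full Q : count Pk (iota 0 (Q * l)) = \sum_(j < l) (Q - (b j).+1).
Proof.
elim: Q => [|Q IH].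
  by rewrite mul0n /=; apply/esym/big1 => j _.
rewrite mulSn addnC iotaD count_cat IH add0n block_part // -big_split /=.
apply: eq_bigr => j _; rewrite ltn_ord mul1n.
by case: ltnP => h /=; lia.
Qed.

Lemma block_all Q m : m <= l ->
  count Pk (iota 0 (Q * l + m)) = \sum_(j < l) ((Q - (b j).+1) + (j < m) * (b j < Q)).
Proof.
move=> ml; rewrite iotaD count_cat block_full add0n block_part //.
by rewrite big_split.
Qed.
End Count.

Lemma head_sort (s : seq nat) m : (forall v, v \in s -> v <= m)%N -> m \in s ->
  head 0%N (sort geq s) = m.
Proof.
move=> hs ms.
have ss := sort_sorted (fun x y => leq_total y x) s.
have mt : m \in sort geq s by rewrite mem_sort.
case E: (sort geq s) ss mt => [|h t] //= ss mt.
have ht : h \in s by rewrite -(mem_sort geq) E mem_head.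
have hm := hs _ ht.
move: mt; rewrite in_cons => /orP[/eqP -> //|mt].
have := order_path_min (fun y x z (h1 : (y <= x)%N) (h2 : (z <= y)%N) => leq_trans h2 h1) ss.
move/allP/(_ _ mt) => /= mh.
by apply/eqP; rewrite eqn_leq hm mh.
Qed.

Section S.
Variable n : nat.
Local Notation l := n.+1.
Variable a : 'I_l -> int.

Lemma Bge0 : 0 <= Bnd a.
Proof. by rewrite /Bnd; apply: sumr_ge0 => j _; exact: normr_ge0. Qed.

Lemma a_bounds j : -Bnd a <= a j <= Bnd a.
Proof.
rewrite -ler_norml /Bnd (bigD1 j) //= lerDl.
by apply: sumr_ge0 => k _; exact: normr_ge0.
Qed.

Lemma mem_window L x y : L <= x -> (y \in window L x) = (L <= y < x).
Proof.
move=> Lx; apply/mapP/idP.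
- case=> k; rewrite mem_iota => /andP[_ hk] ->; apply/andP; split; lia.
- move=> /andP[h1 h2]; exists `|y - L|%N; last by lia.
  by rewrite mem_iota; apply/andP; split; lia.
Qed.

Lemma small_dvd (r j : nat) : (r < l)%N -> (j < l)%N ->
  (l%:Z %| r%:Z - j%:Z)%Z -> r = j.
Proof.
move=> hr hj /dvdzP[c hc].
have : c = 0 by nia.
move=> c0; rewrite c0 mul0r in hc; lia.
Qed.

Lemma inX_char k : inX a (lowB a + k%:Z) =
  ((k %/ l)%N%:Z - Bnd a <= a (inord (k %% l)%N)).
Proof.
have ek : lowB a + k%:Z = ((k %/ l)%N%:Z - Bnd a) * l%:Z + (k %% l)%N%:Z.
  have -> : k%:Z = (k %/ l)%N%:Z * l%:Z + (k %% l)%N%:Z.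
    by rewrite -PoszM -PoszD -divn_eq.
  rewrite /lowB; ring.
have rl : (k %% l < l)%N by rewrite ltn_mod.
rewrite /inX ek; apply/existsP/idP.
- case=> j /andP[hd hq].
  have rj : (k %% l)%N = j.
    apply: small_dvd => //.
    have -> : (k %% l)%N%:Z - j%:Z =
      ((k %/ l)%N%:Z - Bnd a) * l%:Z + (k %% l)%N%:Z - j%:Z - ((k %/ l)%N%:Z - Bnd a) * l%:Z by ring.
    apply/dvdzP; move: hd => /dvdzP[c ->]; exists (c - ((k %/ l)%N%:Z - Bnd a)); ring.
  move: hq; rewrite -rj.
  have -> : ((k %/ l)%N%:Z - Bnd a) * l%:Z + (k %% l)%N%:Z - (k %% l)%N%:Z
    = ((k %/ l)%N%:Z - Bnd a) * l%:Z by ring.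
  rewrite mulzK //.
  have -> : j = inord (k %% l)%N by apply: val_inj; rewrite /= inordK // rj.
  by [].
- move=> h; exists (inord (k %% l)%N); rewrite /= inordK //.
  have -> : ((k %/ l)%N%:Z - Bnd a) * l%:Z + (k %% l)%N%:Z - (k %% l)%N%:Z
    = ((k %/ l)%N%:Z - Bnd a) * l%:Z by ring.
  by rewrite dvdz_mull ?dvdzz //= mulzK.
Qed.


Variable i : 'I_l.
Hypothesis hmax : forall j : 'I_l, a j <= a i.
Hypothesis hlast : forall j : 'I_l, (i < j)%N -> a j < a i.

Definition M := a i * l%:Z + i%:Z.

Lemma inX_le x : inX a x -> x <= M.
Proof.
case/existsP=> j /andP[/dvdzP[c hc] hq].
rewrite hc mulzK // in hq.
have hx : x = c * l%:Z + j%:Z by rewrite -hc; ring.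
have jl := ltn_ord j; have il := ltn_ord i.
rewrite hx /M; case: (ltnP i j) => hij.
- have h := hlast j hij.
  have : c <= a i - 1 by lia.
  move=> h2; nia.
- have h := hmax j.
  nia.
Qed.

Lemma inX_M : inX a M.
Proof.
apply/existsP; exists i; rewrite /M.
have -> : a i * l%:Z + i%:Z - i%:Z = a i * l%:Z by ring.
by rewrite dvdz_mull ?dvdzz //= mulzK.
Qed.

Lemma M_range : lowB a <= M < uppB a.
Proof.
have := a_bounds i; have := ltn_ord i; rewrite /lowB /uppB /M => il /andP[h1 h2].
apply/andP; split; nia.
Qed.

Lemma gaps_mono x y : lowB a <= x -> x <= y -> (gaps a x <= gaps a y)%N.
Proof.
move=> h1 h2; rewrite /gaps /window.
have -> : `|y - lowB a|%N = (`|x - lowB a| + `|y - x|)%N by lia.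
by rewrite iotaD map_cat count_cat leq_addr.
Qed.



Lemma lambda1_gaps : lambda1 (pi_l a) = gaps a M.
Proof.
have [lo hi] := andP M_range.
have Lu : lowB a <= uppB a by lia.
rewrite /lambda1 /pi_l.
set s := [seq _ | _ <- _].
have hs : forall v, v \in s -> (0 < v <= gaps a M)%N.
  move=> v /mapP[x]; rewrite mem_filter mem_window // => /andP[/andP[hx hp] /andP[h1 h2]] ->.
  by rewrite hp /= gaps_mono // inX_le.
case: (posnP (gaps a M)) => hg.
- case E: s hs => [|v t] //= hs.
  have := hs v (mem_head _ _); rewrite hg; case/andP=> h1 h2.
  by move: (leq_trans h1 h2).
- apply: head_sort.
  + by move=> v /hs /andP[].
  + apply/mapP; exists M => //; rewrite mem_filter mem_window // inX_M hg lo hi.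
    by [].
Qed.


Lemma sum_gt (k : 'I_l) : (\sum_(j < l) (k < j)%N = l - k.+1)%N.
Proof.
rewrite -(big_mkord xpredT (fun j => nat_of_bool (k < j)%N)).
rewrite (@big_cat_nat _ _ _ k.+1) //=.
rewrite big1_seq ?add0n; last first.
  move=> j /andP[_]; rewrite mem_index_iota => /andP[_ h].
  by have -> : (k < j)%N = false by lia.
rewrite (@eq_big_seq _ _ _ _ _ _ (fun _ => 1%N)); last first.
  by move=> j; rewrite mem_index_iota => /andP[h _]; rewrite h.
by rewrite sum_nat_const_nat muln1.
Qed.

Hypothesis hsum : \sum_(j < l) a j = 0.

Definition bb (j : 'I_l) : nat := absz (a j + Bnd a).

Lemma hb j : (bb j)%:Z = a j + Bnd a.
Proof. have := a_bounds j; rewrite /bb; lia. Qed.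

Lemma gaps_count : gaps a M =
  count (@Pk n bb) (iota 0 (bb i * l + i)).
Proof.
rewrite /gaps /window count_map.
have e : M - lowB a = (bb i * l + i)%N%:Z.
  by rewrite PoszD PoszM hb /M /lowB; ring.
rewrite e /=; apply: eq_count => k /=.
rewrite inX_char /Pk.
have := hb (inord (k %% l)%N).
set u := bb _; set q := (k %/ l)%N => h.
apply/negP/idP.
- by move=> h2; rewrite ltnNge; apply/negP => h3; apply: h2; lia.
- by move=> h2 h3; lia.
Qed.

Lemma term j : ((bb i - (bb j).+1) + (j < i)%N * (bb j < bb i)%N)%N%:Z
  = a i - a j - (i < j)%N%:Z.
Proof.
have := hb j; have := hb i; have := hmax j.
case: (ltngtP j i) => hji.
- by case: ltnP => /=; lia.
- have := hlast j hji; by case: ltnP => /=; lia.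
- have -> : j = i by apply: val_inj.
  by case: ltnP => /=; lia.
Qed.

Lemma main_sum : (lambda1 (pi_l a))%:Z = \sum_(j < l) (a i - a j - (i < j)%N%:Z).
Proof.
rewrite lambda1_gaps gaps_count block_all; last by have := ltn_ord i; lia.
rewrite (big_morph Posz PoszD (erefl _)).
by apply: eq_bigr => j _; rewrite term.
Qed.

Lemma formula2 : \sum_(j < l) (a i - a j - (i < j)%N%:Z) =
  \sum_(j < l | (j < i)%N) (a i - a j) + \sum_(j < l | (i < j)%N) (a i - a j - 1).
Proof.
rewrite !(big_mkcond (fun j : 'I_l => (j < i)%N)) !(big_mkcond (fun j : 'I_l => (i < j)%N)) -big_split.
apply: eq_bigr => j _; case: (ltngtP j i) => hji /=.
- lia.
- lia.
- have -> : j = i by apply: val_inj.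
  lia.
Qed.

Lemma formula1 : \sum_(j < l) (a i - a j - (i < j)%N%:Z) = (a i - 1) * l%:Z + (i.+1)%:Z.
Proof.
rewrite !sumrB hsum sumr_const card_ord -mulr_natr natz.
rewrite -(big_morph Posz PoszD (erefl _)) sum_gt.
have il := ltn_ord i.
rewrite -subzn //.
set X := a i * l%:Z.
have -> : (a i - 1) * l%:Z = X - l%:Z by rewrite /X; ring.
lia.
Qed.

End S.

Theorem mainTheorem7 (l : nat) (a : 'I_l -> int) (i : 'I_l) :
  (2 <= l)%N ->
  \sum_(j < l) a j = 0 ->
  (forall j : 'I_l, a j <= a i) ->
  (forall j : 'I_l, (i < j)%N -> a j < a i) ->
  (lambda1 (pi_l a))%:Z = (a i - 1) * l%:Z + (i.+1)%:Z /\
  (lambda1 (pi_l a))%:Z =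
    \sum_(j < l | (j < i)%N) (a i - a j) + \sum_(j < l | (i < j)%N) (a i - a j - 1).
Proof.
case: l a i => [|n] a i; first by case: i.
move=> _ hs hm hl.
rewrite (@main_sum n a i hm hl).
- split; [exact: (@formula1 n a i hs) | exact: (@formula2 n a i)].
- exact: hs.
Qed.
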